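(* Let $\alpha,\beta,\gamma\in\mathbb{Z}[i]$ satisfy $\alpha^2+i\beta^2+(1+i)\gamma^2=0$, $\alpha\beta\gamma\neq0$, $\gcd(\alpha,\beta,\gamma)\in U$, and suppose $\alpha=i^m\alpha'$, $\beta=i^n\beta'$, $\gamma=i^l\gamma'$ with $m,n,l\in\{0,1\}$ and $\alpha',\beta',\gamma'\in O^I$. Then $m+l\equiv n+l\equiv1\pmod 2$.
   Context: $\mathbb{Z}[i]$ is the ring of Gaussian integers, $U=\{1,-1,i,-i\}$ its unit group; $R(\alpha),I(\alpha)$ are real and imaginary parts. $O=\{\alpha: R(\alpha)+I(\alpha)\equiv1\pmod 2\}$, $O^I=\{\alpha\in O: R(\alpha)\equiv 1\pmod 4\}$. *)

(* Defs.v *)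
(* Gaussian integers Z[i] modelled as pairs of integers (re, im). *)
From Stdlib Require Import ZArith.
Open Scope Z_scope.

Record gi := GI { R : Z; I : Z }.

Definition gadd (a b : gi) : gi := GI (R a + R b) (I a + I b).
Definition gmul (a b : gi) : gi :=
  GI (R a * R b - I a * I b) (R a * I b + I a * R b).
Definition g0 : gi := GI 0 0.
Definition g1 : gi := GI 1 0.
Definition gi_i : gi := GI 0 1.

Fixpoint ipow (k : nat) : gi :=
  match k with O => g1 | S k' => gmul gi_i (ipow k') end.

Definition is_unit (u : gi) : Prop :=
  u = GI 1 0 \/ u = GI (-1) 0 \/ u = GI 0 1 \/ u = GI 0 (-1).

Definition gdvd (d a : gi) : Prop := exists k, a = gmul d k.

Definition gcd3_unit (a b c : gi) : Prop :=
  forall d, gdvd d a -> gdvd d b -> gdvd d c -> is_unit d.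

Definition in_O (a : gi) : Prop := Z.odd (R a + I a) = true.
Definition in_OI (a : gi) : Prop := in_O a /\ R a mod 4 = 1.

(* Main.v *)
Require Import Defs.
From Stdlib Require Import ZArith Arith Lia.

Lemma oi_form (x : gi) : in_OI x -> exists k j, R x = 4*k+1 /\ I x = 2*j.
Proof.
  destruct x as [a b]; unfold in_OI, in_O; cbn [R I]; intros [Ho Hm].
  exists (a / 4). pose proof (Z.div_mod a 4 ltac:(lia)) as Hd.
  rewrite Hm in Hd.
  destruct (Z.even b) eqn:Eb.
  - apply Z.even_spec in Eb. destruct Eb as [j Hj]. exists j. lia.
  - exfalso. assert (Z.odd b = true) by (rewrite <- Z.negb_even, Eb; reflexivity).
    apply Z.odd_spec in H. destruct H as [j Hj].
    rewrite Hd, Hj in Ho.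
    replace (4 * (a / 4) + 1 + (2 * j + 1)) with (2 * (2 * (a/4) + j + 1)) in Ho by ring.
    rewrite Z.odd_mul in Ho. simpl in Ho. discriminate.
Qed.

Theorem lemma4p17 (alpha beta gamma alpha' beta' gamma' : gi) (m n l : nat) :
  gadd (gadd (gmul alpha alpha) (gmul gi_i (gmul beta beta)))
       (gmul (GI 1 1) (gmul gamma gamma)) = g0 ->
  alpha <> g0 -> beta <> g0 -> gamma <> g0 ->
  gcd3_unit alpha beta gamma ->
  (m <= 1)%nat -> (n <= 1)%nat -> (l <= 1)%nat ->
  alpha = gmul (ipow m) alpha' ->
  beta = gmul (ipow n) beta' ->
  gamma = gmul (ipow l) gamma' ->
  in_OI alpha' -> in_OI beta' -> in_OI gamma' ->
  Nat.odd (m + l) = true /\ Nat.odd (n + l) = true.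
Proof.
  intros E _ _ _ _ Hm Hn Hl Ha Hb Hc Oa Ob Oc.
  destruct (oi_form _ Oa) as [k1 [j1 [Ra Ia]]].
  destruct (oi_form _ Ob) as [k2 [j2 [Rb Ib]]].
  destruct (oi_form _ Oc) as [k3 [j3 [Rc Ic]]].
  clear Oa Ob Oc.
  destruct alpha' as [a1 a2], beta' as [b1 b2], gamma' as [c1 c2]; cbn [R I] in *.
  subst alpha beta gamma a1 a2 b1 b2 c1 c2.
  pose proof (f_equal R E) as ER. pose proof (f_equal I E) as EI.
  clear E.
  destruct m as [|[|m]]; try lia; destruct n as [|[|n]]; try lia;
  destruct l as [|[|l]]; try lia; cbn [ipow gmul gadd R I g0 g1 gi_i] in ER, EI;
  split; try reflexivity;
  exfalso; ring_simplify in ER; ring_simplify in EI; lia.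
Qed.
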